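(* For every integer $q\ge 3$, the length (number of edges) of a longest path in the mirror full binary tree $M_q$ is exactly $2q^2$.
   Context: Let $B_q$ be a full binary tree of height $q$ with vertices $b_{\ell,1},\dots,b_{\ell,2^\ell}$ on level $\ell\in\{0,\dots,q\}$, where for $\ell<q$ the vertex $b_{\ell,i}$ is adjacent to its children $b_{\ell+1,2i-1}$ and $b_{\ell+1,2i}$; let $R_q$ be a disjoint copy with vertices $r_{\ell,i}$ defined analogously. The mirror full binary tree $M_q$ is the graph obtained from the disjoint union of $B_q$ and $R_q$ by identifying $b_{q,i}$ with $r_{q,i}$ for every $i\in\{1,\dots,2^q\}$. A path is a sequence of distinct vertices with consecutive vertices adjacent; its length is its number of edges. *)

(* Defs.v *)
From mathcomp Require Import all_boot.
Set Implicit Arguments. Unset Strict Implicit. Unset Printing Implicit Defensive.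

(* Vertices of the mirror full binary tree M_q are encoded as triples
   (side, level, index) : bool * nat * nat, where side = false means the
   "blue" tree B_q and side = true the "red" tree R_q, level l in {0..q},
   and index i in {1..2^l} (1-indexed, as in the paper).
   Leaves are identified: the level-q vertex is always encoded with
   side = false, so (true, q, i) is not a vertex. *)
Definition vertex := (bool * nat * nat)%type.

Definition mvalid (q : nat) (v : vertex) : bool :=
  let: (s, l, i) := v in
  [&& l <= q, 0 < i, i <= 2 ^ l & (l == q) ==> ~~ s].

Definition mcanon (q : nat) (v : vertex) : vertex :=
  let: (s, l, i) := v in if l == q then (false, l, i) else (s, l, i).

Definition mchild (q : nat) (x y : vertex) : bool :=
  let: (s, l, i) := x in
  (l < q) && ((y == mcanon q (s, l.+1, i.*2.-1)) || (y == mcanon q (s, l.+1, i.*2))).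

Definition madj (q : nat) : rel vertex :=
  fun x y => [&& mvalid q x, mvalid q y & mchild q x y || mchild q y x].

(* A path in M_q: a nonempty sequence of distinct vertices of M_q with
   consecutive vertices adjacent. Its length is size p - 1 (edges). *)
Definition mpath (q : nat) (p : seq vertex) : bool :=
  match p with
  | [::] => false
  | x :: s => [&& uniq p, all (mvalid q) p & path (madj q) x s]
  end.

(* Main.v *)
Require Import Defs.
From mathcomp Require Import all_boot zify.
Set Implicit Arguments. Unset Strict Implicit. Unset Printing Implicit Defensive.

Section M.
Variable q : nat.

Definition root (c : bool) (l k : nat) : vertex := mcanon q (c, l, k.+1).
Definition inD (l k : nat) (v : vertex) : bool :=
  [&& mvalid q v, l <= v.1.2 & (v.2.-1 %/ 2 ^ (v.1.2 - l) == k)].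

Lemma rootE c l k : root c l k = (if l == q then false else c, l, k.+1).
Proof. by rewrite /root /mcanon; case: (l == q). Qed.

Lemma root_lev c l k : (root c l k).1.2 = l.
Proof. by rewrite rootE. Qed.

Lemma mcanon_lev v : (mcanon q v).1.2 = v.1.2.
Proof. by case: v => [[s l] i]; rewrite /mcanon; case: (l == q). Qed.
Lemma mcanon_idx v : (mcanon q v).2 = v.2.
Proof. by case: v => [[s l] i]; rewrite /mcanon; case: (l == q). Qed.

Lemma mvalid_root c l k : mvalid q (root c l k) = (l <= q) && (k < 2 ^ l).
Proof. rewrite rootE /mvalid; case: (l == q) => /=; by rewrite ?andbT. Qed.

Lemma root_in c l k : mvalid q (root c l k) -> inD l k (root c l k).
Proof.
move=> H; apply/and3P; split => //; rewrite root_lev ?leqnn //.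
by rewrite subnn expn0 divn1 rootE.
Qed.

Lemma root_in' c l k : l <= q -> k < 2 ^ l -> inD l k (root c l k).
Proof. by move=> H1 H2; apply: root_in; rewrite mvalid_root H1. Qed.

Lemma D0 k v : inD q k v -> v = root false q k.
Proof.
case: v => [[s l] i] /and3P [/and4P [H1 H2 H3 H4] /= H5 /eqP H6].
have El : l = q by apply/eqP; rewrite eqn_leq H1.
subst l; rewrite eqxx /= in H4; rewrite rootE eqxx; move: H4 => /negbTE ->.
by rewrite subnn expn0 divn1 in H6; rewrite -H6 prednK.
Qed.

Lemma inD_uniq l j j' v : inD l j v -> inD l j' v -> j = j'.
Proof. by move=> /and3P[_ _ /eqP<-] /and3P[_ _ /eqP<-]. Qed.

Lemma inD_valid l k v : inD l k v -> mvalid q v.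
Proof. by case/and3P. Qed.

Lemma inD_lev l k v : inD l k v -> l <= v.1.2.
Proof. by case/and3P. Qed.

Lemma inD_up l j v : inD l.+1 j v -> inD l j./2 v.
Proof.
case/and3P => Hv Hl /eqP Hj; apply/and3P; split => //; first by lia.
have -> : v.1.2 - l = (v.1.2 - l.+1).+1 by lia.
by rewrite expnSr divnMA divn2 Hj.
Qed.

Lemma inD_down l k v : l < v.1.2 -> inD l k v -> exists j, inD l.+1 j v /\ j./2 = k.
Proof.
move=> Hl H; exists (v.2.-1 %/ 2 ^ (v.1.2 - l.+1)).
have H1 : inD l.+1 (v.2.-1 %/ 2 ^ (v.1.2 - l.+1)) v.
  by apply/and3P; split => //; case/and3P: H.
split => //; exact: inD_uniq (inD_up H1) H.
Qed.

Lemma decomp l k v : l < q -> inD l k v ->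
  [\/ v = root false l k, v = root true l k, inD l.+1 k.*2 v | inD l.+1 k.*2.+1 v].
Proof.
move=> Hlq H; have := inD_lev H; rewrite leq_eqVlt => /orP [/eqP El | Hl].
- move: H; case: v El => [[s l'] i] /= <- /and3P [/and4P [_ H2 _ _] _ /eqP].
  rewrite subnn expn0 divn1 => Hi.
  have -> : i = k.+1 by rewrite -Hi prednK.
  have E : (l == q) = false by apply/negbTE; rewrite neq_ltn Hlq.
  clear Hi; by case: s; [apply: Or42 | apply: Or41]; rewrite rootE E.
- have [j [Hj Ej]] := inD_down Hl H.
  move: Hj; rewrite -[j]odd_double_half Ej; case: (odd j) => Hj.
  + by apply: Or44; rewrite add1n in Hj.
  + by apply: Or43; rewrite add0n in Hj.
Qed.

Lemma madjC x y : madj q x y = madj q y x.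
Proof. by rewrite /madj andbCA orbC. Qed.

Lemma lev_eq (u v : vertex) : u = v -> u.1.2 = v.1.2.
Proof. by move=> ->. Qed.

Lemma root_nbr c l k v : l < q -> inD l k v -> madj q (root c l k) v ->
  v = root c l.+1 k.*2 \/ v = root c l.+1 k.*2.+1.
Proof.
move=> Hlq Hv /and3P [_ _ /orP [H | H]].
- have E : (l == q) = false by apply/negbTE; rewrite neq_ltn Hlq.
  move: H; rewrite rootE E /mchild => /andP [_ /orP [/eqP -> | /eqP ->]].
  + by left; rewrite /root doubleS.
  + by right; rewrite /root doubleS.
- exfalso; move: H (inD_lev Hv); case: v {Hv} => [[s a] x].
  rewrite /mchild => /andP [_ /orP [/eqP H | /eqP H]];
  move/lev_eq: H; rewrite mcanon_lev root_lev /= => ->;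
  by rewrite ltnn.
Qed.

Lemma half_lem x : 0 < x -> (x.*2.-1.-1) %/ 2 = x.-1 /\ (x.*2.-1) %/ 2 = x.-1.
Proof. case: x => // x _; rewrite doubleS /= divn2; split.
- by rewrite half_double.
- by rewrite divn2 /= uphalf_double.
Qed.

Lemma child_same u v m j j' : mchild q u v -> inD m j u -> inD m j' v -> j = j'.
Proof.
case: u => [[s a] x]; rewrite /mchild => /andP [_ Hc] Hu Hv.
case/and3P: Hu => /and4P [_ Hx _ _] /= Hma /eqP Hj.
case/and3P: Hv => _ Hmv /eqP Hj'.
have [e1 e2] := half_lem Hx.
move: Hc Hj' => /orP [/eqP -> | /eqP ->]; rewrite mcanon_lev mcanon_idx /=;
  (have -> : a.+1 - m = (a - m).+1 by lia);
  by rewrite expnS divnMA ?e1 ?e2 Hj.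
Qed.

Lemma no_cross u v m j j' : madj q u v -> inD m j u -> inD m j' v -> j = j'.
Proof.
case/and3P => _ _ /orP [H | H] Hu Hv; first exact: child_same H Hu Hv.
by apply/esym; apply: child_same H Hv Hu.
Qed.

Definition sp (p : seq vertex) := if p is x :: s then path (madj q) x s else true.
Definition link (a b : seq vertex) :=
  if a is x :: a' then (if b is y :: _ then madj q (last x a') y else true) else true.
Definition ok l k (p : seq vertex) := [&& uniq p, all (inD l k) p & sp p].

Lemma sp_cat a b : sp (a ++ b) = [&& sp a, link a b & sp b].
Proof.
case: a => [|x a] /=; first by case: b.
rewrite cat_path; case: b => [|y b] /=; first by rewrite !andbT.
by [].
Qed.

Lemma ok_cat l k a b : ok l k (a ++ b) ->
  [/\ ok l k a, ok l k b, link a b & ~~ has (mem a) b].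
Proof.
rewrite /ok cat_uniq all_cat sp_cat.
by case/and3P => /and3P[-> -> ->] /andP[-> ->] /and3P[-> -> ->].
Qed.

Lemma ok_catl l k a b : ok l k (a ++ b) -> ok l k a.
Proof. by case/ok_cat. Qed.
Lemma ok_catr l k a b : ok l k (a ++ b) -> ok l k b.
Proof. by case/ok_cat. Qed.

Lemma ok_catI l k a b : ok l k a -> ok l k b -> link a b -> ~~ has (mem a) b ->
  ok l k (a ++ b).
Proof.
rewrite /ok cat_uniq all_cat sp_cat.
by case/and3P => -> -> -> /and3P[-> -> ->] -> -> .
Qed.

Lemma rev_cons_last (x : vertex) s : rev (x :: s) = last x s :: rev (belast x s).
Proof. by rewrite [x :: s]lastI rev_rcons. Qed.

Lemma sp_rev p : sp (rev p) = sp p.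
Proof.
case: p => [|x s] //; rewrite rev_cons_last /= rev_path.
by apply: eq_path => u v; rewrite /= madjC.
Qed.

Lemma ok_rev l k p : ok l k (rev p) = ok l k p.
Proof. by rewrite /ok rev_uniq all_rev sp_rev. Qed.

Lemma stay l k j x s : l < q -> path (madj q) x s ->
  all (fun v => [&& inD l k v, v != root false l k & v != root true l k]) (x :: s) ->
  inD l.+1 j x -> all (inD l.+1 j) (x :: s).
Proof.
move=> Hlq; elim: s x => [|y s IH] x /=; first by move=> _ _ ->.
case/andP => Hxy Hp /andP [_ /andP [/and3P [Hy Hy1 Hy2] Ha]] Hx.
have Hyj : inD l.+1 j y.
  case: (decomp Hlq Hy) => [E|E|H|H]; first by rewrite E eqxx in Hy1.
  - by rewrite E eqxx in Hy2.
  - by rewrite (no_cross Hxy Hx H).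
  - by rewrite (no_cross Hxy Hx H).
rewrite Hx /=; apply: (IH y Hp) => //=; by rewrite Hy Hy1 Hy2 Ha.
Qed.

Lemma descend l k c y s : l < q -> ok l k (root c l k :: y :: s) ->
  root (~~c) l k \notin y :: s ->
  exists j, [/\ j./2 = k, y = root c l.+1 j & ok l.+1 j (y :: s)].
Proof.
move=> Hlq /and3P [Hu Ha Hs] Hn2.
move: Hs => /= /andP [Hr Hp].
move: Ha => /= /andP [Hroot /andP [Hy Ha]].
move: Hu => /= /andP [Hn1 Hu].
have Hj : exists j, j./2 = k /\ y = root c l.+1 j.
  case: (root_nbr Hlq Hy Hr) => ->.
  - by exists k.*2; rewrite doubleK.
  - by exists k.*2.+1; rewrite /= uphalf_double.
case: Hj => j [Ejk Ey]; exists j; split => //.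
have Hyj : inD l.+1 j y.
  by rewrite Ey; apply: root_in; rewrite -Ey; exact: inD_valid Hy.
have Hall : all (inD l.+1 j) (y :: s).
  apply: (stay Hlq Hp) Hyj; apply/allP => v Hv; apply/and3P; split.
  - by move: Hv; rewrite inE => /orP [/eqP -> | Hv]; [exact: Hy | exact: (allP Ha)].
  - by apply/negP => /eqP E; subst v; case: c Hn1 Hn2 {Hr Hroot Ey}; rewrite /= Hv.
  - by apply/negP => /eqP E; subst v; case: c Hn1 Hn2 {Hr Hroot Ey}; rewrite /= Hv.
by apply/and3P; split.
Qed.

Lemma rootNq c k : root (~~c) q k = root c q k.
Proof. by rewrite !rootE eqxx. Qed.

Lemma last_rev_head (y y' : vertex) s t : rev (y :: s) = y' :: t -> last y s = y'.
Proof. by rewrite rev_cons_last => -[]. Qed.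

Lemma ok_all l k x s v : ok l k (x :: s) -> v \in x :: s -> inD l k v.
Proof. by case/and3P => _ /allP H _; apply: H. Qed.

Lemma ok_uniq l k s : ok l k s -> uniq s.
Proof. by case/and3P. Qed.

Lemma rev_ok_last l k x t z : ok l k (x :: rcons t z) -> ok l k (z :: rev t).
Proof.
rewrite -ok_rev rev_cons rev_rcons -cats1; exact: ok_catl.
Qed.

Lemma Hbound n : forall l k c s, l + n = q -> ok l k (root c l k :: s) ->
  last (root c l k) s = root (~~c) l k -> size s <= 2 * n.
Proof.
elim: n => [|n IH] l k c s El Hok Hlast.
- rewrite addn0 in El; subst l.
  move: Hok Hlast; case/lastP: s => [//|s z] Hok; rewrite last_rcons rootNq => Ez.
  move: Hok => /and3P [/= /andP [Hn _] _ _].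
  by rewrite mem_rcons Ez mem_head in Hn.
- have Hlq : l < q by lia.
  move: Hok Hlast; case/lastP: s => [//|s z] Hok; rewrite last_rcons => Ez.
  case: s Hok => [|y s] Hok; first by rewrite /=; lia.
  have Hok1 : ok l k ((root c l k :: y :: s) ++ [:: z]) by rewrite cat_cons cats1.
  move/ok_catl: Hok1 => Hok1.
  have Hu := ok_uniq Hok; rewrite cons_uniq rcons_uniq in Hu.
  case/and3P: Hu => Hn1 Hn2 _.
  rewrite Ez in Hn2.
  have [j [Ejk Ey Hj]] := descend Hlq Hok1 Hn2.
  have Hok2 := rev_ok_last Hok.
  case E: (rev (y :: s)) => [|y' t].
    by have := congr1 size E; rewrite size_rev.
  rewrite E Ez in Hok2.
  have Hn3 : root (~~ ~~ c) l k \notin y' :: t.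
    by rewrite negbK -E mem_rev; move: Hn1; rewrite mem_rcons inE negb_or => /andP [].
  have [j' [_ Ey' Hj']] := descend Hlq Hok2 Hn3.
  have Ejj : j = j'.
    apply: (@inD_uniq l.+1 j j' y); first by apply: ok_all Hj _; rewrite mem_head.
    by apply: ok_all Hj' _; rewrite -E mem_rev mem_head.
  subst j'.
  rewrite size_rcons /=.
  have := IH l.+1 j c s ltac:(lia); rewrite -Ey => /(_ Hj).
  by rewrite (last_rev_head E) Ey' => /(_ erefl); lia.
Qed.

Lemma rootq c k : root c q k = root false q k.
Proof. by rewrite !rootE eqxx. Qed.

Lemma Gchild_gen n
  (IH : forall l k c s, l + n = q -> ok l k (root c l k :: s) -> size s <= n * n + 2 * n)
  l k c s : l + n.+1 = q -> ok l k (root c l k :: s) -> root (~~c) l k \notin s ->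
  size s <= n * n + 2 * n + 1.
Proof.
move=> El Hok Hn; case: s Hok Hn => [//|y s] Hok Hn.
have Hlq : l < q by lia.
have [j [_ Ey Hj]] := descend Hlq Hok Hn.
rewrite Ey in Hj.
have := IH l.+1 j c s ltac:(lia) Hj; rewrite /=; lia.
Qed.

Lemma Gbound n : forall l k c s, l + n = q -> ok l k (root c l k :: s) ->
  size s <= n * n + 2 * n.
Proof.
elim: n => [|n IH] l k c s El Hok.
- rewrite addn0 in El; subst l.
  case: s Hok => [//|y s] Hok.
  have Hy : inD q k y by apply: ok_all Hok _; rewrite !inE eqxx orbT.
  have := ok_uniq Hok; rewrite /= (D0 Hy) rootq mem_head //.
- case: (boolP (root (~~c) l k \in s)) => Hin.
  + move: Hok; case/splitPr: Hin => s1 s2 Hok.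
    have Hok1 : ok l k ((root c l k :: rcons s1 (root (~~c) l k)) ++ s2)
      by rewrite cat_cons cat_rcons.
    move/ok_catl: Hok1 => Hok1.
    have H1 := Hbound El Hok1 (last_rcons _ _ _).
    have Hok2 : ok l k (root (~~c) l k :: s2) := ok_catr (a := root c l k :: s1) Hok.
    have Hn : root (~~ ~~ c) l k \notin s2.
      move: (ok_uniq Hok); rewrite cons_uniq => /andP [H _]; apply: contra H.
      by rewrite negbK => H; rewrite mem_cat inE H !orbT.
    have H2 := @Gchild_gen n IH l k (~~c) s2 El Hok2 Hn.
    rewrite size_cat /=; rewrite size_rcons in H1; nia.
  + have := Gchild_gen IH El Hok Hin; nia.
Qed.

Lemma Gchild n l k c s : l + n.+1 = q -> ok l k (root c l k :: s) ->
  root (~~c) l k \notin s -> size s <= n * n + 2 * n + 1.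
Proof. move=> El Hok Hn; exact: (@Gchild_gen n (@Gbound n) l k c s El Hok Hn). Qed.

Lemma sqS n : n.+1 * n.+1 = n * n + 2 * n + 1.
Proof. nia. Qed.

Lemma Kbound n : forall l k c sP sQ, l + n = q -> ok l k (root c l k :: sP) ->
  ok l k (root (~~c) l k :: sQ) ->
  (forall v, v \in root c l k :: sP -> v \notin root (~~c) l k :: sQ) ->
  0 < n /\ size sP + size sQ <= 2 * (n * n).
Proof.
elim: n => [|n IH] l k c sP sQ El HP HQ Hd.
- rewrite addn0 in El; subst l.
  by have := Hd _ (mem_head _ _); rewrite rootNq mem_head.
- have Hlq : l < q by lia.
  have HnP : root (~~c) l k \notin sP.
    apply/negP => H; have := Hd (root (~~c) l k); rewrite inE H orbT mem_head.
    by move=> /(_ erefl).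
  have HnQ : root (~~ ~~c) l k \notin sQ.
    rewrite negbK; apply/negP => H; have := Hd _ (mem_head _ _).
    by rewrite inE H orbT.
  case: sP HP HnP Hd => [|yP sP] HP HnP Hd.
    by have H := Gchild El HQ HnQ; split => //=; clear -H; nia.
  case: sQ HQ HnQ Hd => [|yQ sQ] HQ HnQ Hd.
    by have H := Gchild El HP HnP; split => //=; rewrite /= in H; clear -H; nia.
  have [jP [EjP EyP HjP]] := descend Hlq HP HnP.
  have [jQ [EjQ EyQ HjQ]] := descend Hlq HQ HnQ.
  split => //; rewrite /=.
  case: (jP =P jQ) => Ej.
  + subst jQ; rewrite EyP in HjP; rewrite EyQ in HjQ.
    have Hd' : forall v, v \in root c l.+1 jP :: sP -> v \notin root (~~c) l.+1 jP :: sQ.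
      move=> v Hv; rewrite -EyP in Hv; rewrite -EyQ; apply/negP => Hv'.
      have H1 : v \in root c l k :: yP :: sP by rewrite inE Hv orbT.
      have H2 : v \in root (~~c) l k :: yQ :: sQ by rewrite inE Hv' orbT.
      by move: (Hd v H1); rewrite H2.
    have [H0 H] := IH l.+1 jP c sP sQ ltac:(lia) HjP HjQ Hd'; clear -H0 H; rewrite sqS; lia.
  + rewrite EyP in HjP; rewrite EyQ in HjQ.
    have H1 := @Gbound n l.+1 jP c sP ltac:(lia) HjP; have H2 := @Gbound n l.+1 jQ (~~c) sQ ltac:(lia) HjQ; clear -H1 H2; rewrite sqS; lia.
Qed.

Lemma uniq_disj (a b : seq vertex) v : uniq (a ++ b) -> v \in a -> v \in b -> False.
Proof. by rewrite cat_uniq => /and3P [_ /hasPn H _] Ha Hb; move: (H v Hb); rewrite Ha. Qed.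

Lemma ok_left l k p1 x p2 : ok l k (p1 ++ x :: p2) -> ok l k (x :: rev p1).
Proof. by rewrite -cat_rcons => /ok_catl; rewrite -ok_rev rev_rcons. Qed.

Lemma half_cases j k : j./2 = k -> j = k.*2 \/ j = k.*2.+1.
Proof.
move=> <-; have := odd_double_half j; case: (odd j) => /= E.
- by right; rewrite -[in LHS]E add1n.
- by left; rewrite -[in LHS]E add0n.
Qed.

Lemma root_neq c l k : l < q -> root c l k != root (~~c) l k.
Proof.
move=> H; have E : (l == q) = false by apply/negbTE; rewrite neq_ltn H.
by rewrite !rootE E; case: c.
Qed.

Lemma one_root n l k c p : l + n.+1 = q -> ok l k p -> root c l k \in p ->
  root (~~c) l k \notin p -> size p <= 2 * (n.+1 * n.+1) + 1.
Proof.
move=> El Hok Hin Hn; move: Hok Hn; case/splitPr: Hin => p1 p2 Hok Hn.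
have Hn2 : root (~~c) l k \notin p2.
  by apply: contra Hn => H; rewrite mem_cat inE H !orbT.
have Hn1 : root (~~c) l k \notin rev p1.
  by rewrite mem_rev; apply: contra Hn => H; rewrite mem_cat H.
have H2 := Gchild El (ok_catr Hok) Hn2.
have H1 := Gchild El (ok_left Hok) Hn1.
rewrite size_rev in H1; rewrite size_cat /= sqS; clear -H1 H2; lia.
Qed.

Lemma two_root n l k c p1 p2 p3 : l + n.+1 = q ->
  ok l k (p1 ++ root c l k :: p2 ++ root (~~c) l k :: p3) ->
  size (p1 ++ root c l k :: p2 ++ root (~~c) l k :: p3) <= 2 * (n.+1 * n.+1) + 1 \/
  size (p1 ++ root c l k :: p2 ++ root (~~c) l k :: p3) <= n * n + 4 * n + 4.
Proof.
move=> El Hok.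
have Hlq : l < q by lia.
set b := root c l k in Hok *; set r := root (~~c) l k in Hok *.
have Hu := ok_uniq Hok.
have Hok' : ok l k ((p1 ++ b :: p2) ++ r :: p3) by rewrite -catA.
have Hu' := ok_uniq Hok'.
have HokB : ok l k (b :: rcons p2 r).
  by apply: (@ok_catl _ _ _ p3); rewrite cat_cons cat_rcons; exact: ok_catr Hok.
have HokR : ok l k (r :: p3) := ok_catr Hok'.
have HokL : ok l k (b :: rev p1) := ok_left Hok.
have HH := Hbound El HokB (last_rcons _ _ _).
rewrite size_rcons in HH.
have Hrp1 : r \notin rev p1.
  rewrite mem_rev; apply/negP => H; apply: (uniq_disj Hu H).
  by rewrite inE mem_cat inE eqxx !orbT.
have Hbp3 : root (~~ ~~ c) l k \notin p3.
  rewrite negbK; apply/negP => H.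
  have H1 : b \in p1 ++ b :: p2 by rewrite mem_cat inE eqxx orbT.
  have H2 : b \in r :: p3 by rewrite inE H orbT.
  exact: uniq_disj Hu' H1 H2.
rewrite size_cat /= size_cat /=.
case E1: (rev p1) HokL Hrp1 => [|y1 t1] HokL Hrp1.
  have E : p1 = [::] by rewrite -[p1]revK E1.
  subst p1; have H3 := Gchild El HokR Hbp3.
  right; rewrite /=; clear -HH H3; lia.
case: p3 HokR Hbp3 Hok Hu Hok' Hu' => [|y3 t3] HokR Hbp3 Hok Hu Hok' Hu'.
  have H1 := Gchild El HokL Hrp1.
  have Es : size p1 = size (y1 :: t1) by rewrite -E1 size_rev.
  right; rewrite Es /=; rewrite /= in H1; clear -HH H1; lia.
have [j1 [Ej1 Ey1 Hj1]] := descend Hlq HokL Hrp1.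
have [j3 [Ej3 Ey3 Hj3]] := descend Hlq HokR Hbp3.
have Hp1 : forall v, v \in y1 :: t1 -> v \in p1 by move=> v; rewrite -E1 mem_rev.
case: (j1 =P j3) => Ej.
- subst j3; left.
  rewrite Ey1 in Hj1; rewrite Ey3 in Hj3.
  have Hd : forall v, v \in root c l.+1 j1 :: t1 -> v \notin root (~~c) l.+1 j1 :: t3.
    move=> v Hv; rewrite -Ey3; apply/negP => Hv'; rewrite -Ey1 in Hv.
    apply: (uniq_disj Hu (Hp1 v Hv)).
    by rewrite inE mem_cat inE Hv' !orbT.
  have [H0 HK] := @Kbound n l.+1 j1 c t1 t3 ltac:(lia) Hj1 Hj3 Hd.
  have Es : size p1 = size (y1 :: t1) by rewrite -E1 size_rev.
  rewrite Es /=; rewrite /= in HK; clear -H0 HK HH; rewrite sqS; lia.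
- exfalso.
  case: p2 HokB HH Hok Hu Hok' Hu' => [|y2 t2] HokB HH Hok Hu Hok' Hu'.
    have Hr : inD l k r by apply: ok_all HokB _; rewrite !inE eqxx orbT.
    have Hbr : madj q b r by case/and3P: HokB => _ _ /andP [].
    have [E|E] := root_nbr Hlq Hr Hbr; move/lev_eq: E; rewrite /r !root_lev => E;
    by clear -E; lia.
  have HokB1 : ok l k (b :: y2 :: t2) by move: HokB; rewrite -cats1 -cat_cons => /ok_catl.
  have Hr2 : r \notin y2 :: t2.
    apply/negP => H; move: (ok_uniq HokB); rewrite cons_uniq rcons_uniq.
    by rewrite H /= andbF.
  have [j2 [Ej2 Ey2 Hj2]] := descend Hlq HokB1 Hr2.
  have HokR2 := rev_ok_last HokB.
  case E2: (rev (y2 :: t2)) HokR2 => [|y2' t2'] HokR2.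
    by have := congr1 size E2; rewrite size_rev.
  have Hb2 : root (~~ ~~ c) l k \notin y2' :: t2'.
    rewrite negbK -E2 mem_rev; apply/negP => H; move: (ok_uniq HokB).
    by rewrite cons_uniq mem_rcons inE H orbT.
  have [j2' [_ Ey2' Hj2']] := descend Hlq HokR2 Hb2.
  have Ejj : j2 = j2'.
    apply: (@inD_uniq l.+1 j2 j2' y2'); last by apply: ok_all Hj2' _; rewrite mem_head.
    by apply: ok_all Hj2 _; rewrite -mem_rev E2 mem_head.
  subst j2'.
  have [C1|C1] := half_cases Ej1; have [C2|C2] := half_cases Ej2;
  have [C3|C3] := half_cases Ej3; try (by apply: Ej; rewrite C1 C3).
  + have E12 : j1 = j2 by rewrite C1 C2.
    apply: (uniq_disj Hu (Hp1 y1 (mem_head _ _))).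
    by rewrite inE mem_cat Ey1 E12 -Ey2 mem_head !orbT.
  + have E32 : j3 = j2 by rewrite C3 C2.
    have Hy2' : y2' \in y2 :: t2 by rewrite -mem_rev E2 mem_head.
    have H1 : y2' \in p1 ++ b :: y2 :: t2 by rewrite mem_cat inE Hy2' !orbT.
    have H2 : y2' \in r :: y3 :: t3 by rewrite Ey2' -E32 -Ey3 !inE eqxx !orbT.
    exact: uniq_disj Hu' H1 H2.
  + have E32 : j3 = j2 by rewrite C3 C2.
    have Hy2' : y2' \in y2 :: t2 by rewrite -mem_rev E2 mem_head.
    have H1 : y2' \in p1 ++ b :: y2 :: t2 by rewrite mem_cat inE Hy2' !orbT.
    have H2 : y2' \in r :: y3 :: t3 by rewrite Ey2' -E32 -Ey3 !inE eqxx !orbT.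
    exact: uniq_disj Hu' H1 H2.
  + have E12 : j1 = j2 by rewrite C1 C2.
    apply: (uniq_disj Hu (Hp1 y1 (mem_head _ _))).
    by rewrite inE mem_cat Ey1 E12 -Ey2 mem_head !orbT.
Qed.

Lemma F0 k p : ok q k p -> size p <= 1.
Proof.
case: p => [|x [|y s]] // Hok.
have Hx : inD q k x by apply: ok_all Hok _; rewrite mem_head.
have Hy : inD q k y by apply: ok_all Hok _; rewrite !inE eqxx orbT.
by move: (ok_uniq Hok); rewrite /= (D0 Hx) (D0 Hy) mem_head.
Qed.

Lemma Fstep n l k A : l + n.+1 = q ->
  (forall j p, ok l.+1 j p -> size p <= A) ->
  forall p, ok l k p ->
  [\/ size p <= A, size p <= 2 * (n.+1 * n.+1) + 1 | size p <= n * n + 4 * n + 4].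
Proof.
move=> El HA p Hok.
have Hlq : l < q by lia.
case: (boolP (root false l k \in p)) => Hf; case: (boolP (root true l k \in p)) => Ht.
- move: Hok; case/splitPr: Hf Ht => p1 p2 Ht Hok.
  move: Ht; rewrite mem_cat inE => /or3P [Ht | Ht | Ht].
  + move: Hok; case/splitPr: Ht => a b Hok.
    rewrite -catA cat_cons in Hok *.
    have [H|H] := @two_root n l k true a b p2 El Hok.
    * exact: Or32.
    * exact: Or33.
  + by have := @root_neq false l k Hlq; rewrite eq_sym Ht.
  + move: Hok; case/splitPr: Ht => a b Hok.
    have [H|H] := @two_root n l k false p1 a b El Hok.
    * exact: Or32.
    * exact: Or33.
- by apply: Or32; apply: (@one_root n l k false p).
- by apply: Or32; apply: (@one_root n l k true p).
- apply: Or31; case: p Hok Hf Ht => [//|x s] Hok Hf Ht.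
  have Hx : inD l k x by apply: ok_all Hok _; rewrite mem_head.
  have Hall : all (fun v => [&& inD l k v, v != root false l k & v != root true l k]) (x :: s).
    apply/allP => v Hv; rewrite (ok_all Hok Hv) /=.
    apply/andP; split; apply/negP => /eqP E.
    * by move: Hf; rewrite -E Hv.
    * by move: Ht; rewrite -E Hv.
  have Hp : path (madj q) x s by case/and3P: Hok.
  have [E|E|H|H] := decomp Hlq Hx.
  + by move: Hf; rewrite -E mem_head.
  + by move: Ht; rewrite -E mem_head.
  + apply: (HA k.*2); apply/and3P; split; [exact: ok_uniq Hok | exact: stay Hlq Hp Hall H | done].
  + apply: (HA k.*2.+1); apply/and3P; split; [exact: ok_uniq Hok | exact: stay Hlq Hp Hall H | done].
Qed.

Lemma Fbound n : forall l k p, l + n = q -> ok l k p -> size p <= 2 * (n * n) + 2.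
Proof.
elim: n => [|n IH] l k p El Hok.
- rewrite addn0 in El; subst l; have := F0 Hok; lia.
- have HA : forall j p, ok l.+1 j p -> size p <= 2 * (n * n) + 2.
    by move=> j p' H; apply: (IH l.+1 j p') => //; lia.
  have [H|H|H] := Fstep El HA Hok; rewrite sqS; lia.
Qed.

Lemma upper p : 3 <= q -> ok 0 0 p -> size p <= 2 * (q * q) + 1.
Proof.
move=> Hq Hok.
have El : 0 + (q.-1).+1 = q by lia.
have HA : forall j p, ok 1 j p -> size p <= 2 * (q.-1 * q.-1) + 2.
  by move=> j p' H; apply: (Fbound (l := 1) (k := j)) => //; lia.
have Eq : q * q = q.-1 * q.-1 + 2 * q.-1 + 1 by rewrite -sqS prednK //; lia.
have H2 : 1 <= q.-1 * q.-1 by nia.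
have [H|H|H] := Fstep El HA Hok; rewrite Eq; lia.
Qed.

Lemma madj_down c l k : l < q -> k < 2 ^ l ->
  madj q (root c l k) (root c l.+1 k.*2) && madj q (root c l k) (root c l.+1 k.*2.+1).
Proof.
move=> Hlq Hk.
have E : (l == q) = false by apply/negbTE; rewrite neq_ltn Hlq.
have V1 : mvalid q (root c l k) by rewrite mvalid_root Hk ltnW.
have Hk2 : k.*2.+1 < 2 ^ l.+1 by rewrite expnS; lia.
have V2 : mvalid q (root c l.+1 k.*2) by rewrite mvalid_root Hlq; lia.
have V3 : mvalid q (root c l.+1 k.*2.+1) by rewrite mvalid_root Hlq Hk2.
rewrite /madj V1 V2 V3 /=; rewrite [root c l k]rootE E /mchild Hlq doubleS /=.
by rewrite !eqxx /= orbT.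
Qed.

Lemma ok_allP l k p v : ok l k p -> v \in p -> inD l k v.
Proof. by case/and3P => _ /allP H _; apply: H. Qed.

Lemma ok_up l j p : ok l.+1 j p -> ok l j./2 p.
Proof.
case/and3P => Hu Ha Hs; apply/and3P; split => //.
by apply/allP => v Hv; apply: inD_up; apply: (allP Ha).
Qed.

Lemma notin_child l j c k' p : ok l.+1 j p -> root c l k' \notin p.
Proof.
move=> Hok; apply/negP => H; have := inD_lev (ok_allP Hok H).
by rewrite root_lev ltnn.
Qed.

Lemma disj_child l j1 j2 a b : ok l j1 a -> ok l j2 b -> j1 != j2 -> ~~ has (mem a) b.
Proof.
move=> Ha Hb Hj; apply/hasPn => v Hv; apply/negP => Hv'.
by move: Hj; rewrite (inD_uniq (ok_allP Ha Hv') (ok_allP Hb Hv)) eqxx.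
Qed.

Lemma ok_consI l k x p : inD l k x -> ok l k p -> x \notin p ->
  (if p is y :: _ then madj q x y else true) -> ok l k (x :: p).
Proof.
move=> Hx /and3P [Hu Ha Hs] Hn Hl; apply/and3P; split.
- by rewrite /= Hn Hu.
- by rewrite /= Hx Ha.
- by case: p Hu Ha Hs Hn Hl => [|y p] //= _ _ -> _ ->.
Qed.

Lemma link_rcons a x y b : link (rcons a x) (y :: b) = madj q x y.
Proof. by case: a => [|z a] //=; rewrite last_rcons. Qed.

Fixpoint Hp (c : bool) (n k : nat) : seq vertex :=
  match n with
  | 0 => [:: root c q k]
  | n'.+1 => root c (q - n) k :: Hp c n' k.*2 ++ [:: root (~~c) (q - n) k]
  end.

Fixpoint Gp (c : bool) (n k : nat) : seq vertex :=
  match n with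
  | 0 => [:: root c q k]
  | n'.+1 => root c (q - n) k :: Hp c n' k.*2 ++ root (~~c) (q - n) k :: Gp (~~c) n' k.*2.+1
  end.

Lemma dbl_lt k l : k < 2 ^ l -> k.*2 < 2 ^ l.+1 /\ k.*2.+1 < 2 ^ l.+1.
Proof. by rewrite expnS; lia. Qed.

Lemma Hp_spec n : forall c k, n <= q -> k < 2 ^ (q - n) ->
  [/\ ok (q - n) k (Hp c n k),
      exists t, Hp c n k = root c (q - n) k :: t /\ last (root c (q - n) k) t = root (~~c) (q - n) k
    & size (Hp c n k) = (2 * n).+1].
Proof.
elim: n => [|n IH] c k Hn Hk.
- rewrite subn0 in Hk *; split => //.
  + apply: ok_consI => //; first by apply: root_in'.
  + by exists [::]; rewrite /= rootNq.
- set l := q - n.+1.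
  have El : q - n = l.+1 by rewrite /l; lia.
  have Hlq : l < q by rewrite /l; lia.
  have [Hk1 _] := dbl_lt Hk.
  have [Hok [t [Et Elast]] Hs] := IH c k.*2 ltac:(lia) ltac:(by rewrite El).
  rewrite El in Hok Et Elast.
  have Hok' := ok_up Hok; rewrite doubleK in Hok'.
  have /andP [M1 _] := madj_down c Hlq Hk.
  have /andP [M2 _] := madj_down (~~c) Hlq Hk.
  split.
  + rewrite /=; apply: ok_consI.
    * exact: root_in' (ltnW Hlq) Hk.
    * apply: ok_catI => //.
      - by apply: ok_consI => //; apply: root_in' (ltnW Hlq) Hk.
      - by rewrite Et /= Elast madjC.
      - by rewrite /= orbF -/l; apply: notin_child Hok.
    * by rewrite mem_cat (negbTE (notin_child _ _ Hok)) inE (negbTE (root_neq c k Hlq)).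
    * by rewrite Et.
  + exists (Hp c n k.*2 ++ [:: root (~~c) l k]); split => //; by rewrite Et /= last_cat /=.
  + by rewrite /= size_cat Hs /=; lia.
Qed.

Lemma Gp_spec n : forall c k, n <= q -> k < 2 ^ (q - n) ->
  [/\ ok (q - n) k (Gp c n k),
      exists t, Gp c n k = root c (q - n) k :: t
    & size (Gp c n k) = n * n + 2 * n + 1].
Proof.
elim: n => [|n IH] c k Hn Hk.
- rewrite subn0 in Hk *; split => //.
  + apply: ok_consI => //; first by apply: root_in'.
  + by exists [::].
- set l := q - n.+1.
  have El : q - n = l.+1 by rewrite /l; lia.
  have Hlq : l < q by rewrite /l; lia.
  have [Hk1 Hk2] := dbl_lt Hk.
  have [HokH [t [Et Elast]] HsH] := @Hp_spec n c k.*2 (ltnW Hn) ltac:(by rewrite El).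
  have [HokG [u Eu] HsG] := IH (~~c) k.*2.+1 ltac:(lia) ltac:(by rewrite El).
  rewrite El in HokH Et Elast HokG Eu.
  have HokH' := ok_up HokH; rewrite doubleK in HokH'.
  have HokG' := ok_up HokG; rewrite /= uphalf_double in HokG'.
  have /andP [M1 _] := madj_down c Hlq Hk.
  have /andP [M2 M3] := madj_down (~~c) Hlq Hk.
  have Hz : inD l k (root (~~c) l k) by apply: root_in' (ltnW Hlq) Hk.
  have Hx : inD l k (root c l k) by apply: root_in' (ltnW Hlq) Hk.
  have HokZ : ok l k (root (~~c) l k :: Gp (~~c) n k.*2.+1).
    apply: ok_consI => //; first by apply: notin_child HokG.
    by rewrite Eu.
  split.
  + rewrite /=; apply: ok_consI => //.
    * apply: ok_catI => //.
      - by rewrite Et /= Elast madjC.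
      - rewrite /= negb_or; apply/andP; split; first by apply: notin_child HokH.
        apply: disj_child HokH HokG _; by rewrite eqn_leq ltnn andbF.
    * rewrite mem_cat inE (negbTE (notin_child _ _ HokH)) (negbTE (root_neq c k Hlq)) /=.
      by apply: notin_child HokG.
    * by rewrite Et.
  + by exists (Hp c n k.*2 ++ root (~~c) l k :: Gp (~~c) n k.*2.+1).
  + rewrite /= size_cat HsH /= HsG sqS; lia.
Qed.

Lemma lower : 3 <= q -> exists p : seq vertex, mpath q p /\ (size p).-1 = 2 * q ^ 2.
Proof.
move=> Hq.
have E1 : q - q.-1 = 1 by lia.
have [Hok0 [t0 Et0] Hs0] := @Gp_spec q.-1 false 0 (leq_pred q) ltac:(by rewrite E1).
have [Hok1 [t1 Et1] Hs1] := @Gp_spec q.-1 false 1 (leq_pred q) ltac:(by rewrite E1).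
rewrite E1 in Hok0 Et0 Hok1 Et1.
have Hx : inD 0 0 (root false 0 0) by apply: root_in'.
have /andP [M0 M1] := @madj_down false 0 0 ltac:(lia) erefl.
have HokA : ok 0 0 (root false 0 0 :: Gp false q.-1 0).
  apply: ok_consI => //; [exact: ok_up Hok0 | exact: notin_child Hok0 | by rewrite Et0].
have HokB : ok 0 0 (Gp false q.-1 1) := ok_up Hok1.
have HokP : ok 0 0 (rev (root false 0 0 :: Gp false q.-1 0) ++ Gp false q.-1 1).
  apply: ok_catI => //; first by rewrite ok_rev.
  - by rewrite Et1 rev_cons link_rcons.
  - apply/hasPn => v Hv /=; rewrite mem_rev inE negb_or; apply/andP; split.
    + by apply/negP => /eqP E; subst v; move: (notin_child false 0 Hok1); rewrite Hv.
    + apply/negP => Hv'.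
      by have := inD_uniq (ok_allP Hok0 Hv') (ok_allP Hok1 Hv).
exists (rev (root false 0 0 :: Gp false q.-1 0) ++ Gp false q.-1 1); split.
- move: HokP; case E: (_ ++ _) => [|y s].
  + by have := congr1 size E; rewrite size_cat size_rev /= Et1.
  + case/and3P => Hu Ha Hs; apply/and3P; split => //.
    by apply/allP => v Hv; apply: inD_valid (allP Ha v Hv).
- rewrite size_cat size_rev /= Hs0 Hs1 -mulnn.
  have Eq : q = q.-1.+1 by lia.
  rewrite [in RHS]Eq sqS; lia.
Qed.

Lemma valid_inD0 v : mvalid q v -> inD 0 0 v.
Proof.
move=> H; apply/and3P; split => //.
case: v H => [[s l] i] /and4P [_ H1 H2 _] /=.
by rewrite subn0 divn_small //; lia.
Qed.
End M.

Theorem mainTheorem19 (q : nat) : 3 <= q ->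
  (exists p : seq vertex, mpath q p /\ (size p).-1 = 2 * q ^ 2) /\
  (forall p : seq vertex, mpath q p -> (size p).-1 <= 2 * q ^ 2).
Proof.
move=> Hq; split; first exact: lower Hq.
move=> p Hp.
have Hok : ok q 0 0 p.
  case: p Hp => [//|x s] /and3P [Hu Ha Hs]; apply/and3P; split => //.
  by apply/allP => v Hv; apply: valid_inD0; apply: (allP Ha).
have := upper Hq Hok; rewrite -mulnn; lia.
Qed.
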